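(* Let $F$ be an infinite field, let $V$ and $W$ be vector spaces over $F$, and let $n$ and $m_1,\dots,m_n$ be positive integers. Suppose that $m_i$-linear maps $f_i:V^{m_i}\to W$ ($i=1,\dots,n$) are such that for each $x\in V$ at least one of the elements $f_1(x,\dots,x),\dots,f_n(x,\dots,x)$ is $0$. Then there exists $i\in\{1,\dots,n\}$ such that $f_i(x,\dots,x)=0$ for every $x\in V$. *)

(* Defs.v *)
From mathcomp Require Import all_boot all_algebra.
Set Implicit Arguments. Unset Strict Implicit. Unset Printing Implicit Defensive.
Import GRing.Theory.
Local Open Scope ring_scope.

Definition infinite_carrier (T : eqType) : Prop :=
  forall s : seq T, exists x : T, x \notin s.

Definition upd (V : Type) (m : nat) (x : 'I_m -> V) (j : 'I_m) (v : V) : 'I_m -> V :=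
  fun k => if k == j then v else x k.

Definition multilinear (F : pzRingType) (V W : lmodType F) (m : nat)
    (f : ('I_m -> V) -> W) : Prop :=
  forall (j : 'I_m) (x : 'I_m -> V) (a : F) (u v : V),
    f (upd x j (a *: u + v)) = a *: f (upd x j u) + f (upd x j v).

Definition diag (m : nat) {V : Type} (x : V) : 'I_m -> V := fun _ => x.
Arguments diag m {V} x.

(* Main.v *)
From Stdlib Require Import Classical FunctionalExtensionality.
Require Import Defs.
From mathcomp Require Import all_boot all_algebra.
Set Implicit Arguments. Unset Strict Implicit. Unset Printing Implicit Defensive.
Import GRing.Theory.
Local Open Scope ring_scope.

Section P.
Variables (F : fieldType) (W : lmodType F).

Fixpoint PolyW (d : nat) (p : F -> W) : Prop :=
  match d with
  | 0%N => forall t, p t = 0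
  | d'.+1 => exists c (q : F -> W), PolyW d' q /\ forall t, p t = c + t *: q t
  end.

Lemma polyW_ext d p q : (forall t, p t = q t) -> PolyW d p -> PolyW d q.
Proof.
case: d => [|d] E /=; first by move=> H t; rewrite -E H.
by move=> [c [r [Hr Hp]]]; exists c, r; split=> // t; rewrite -E Hp.
Qed.

Lemma polyW_le d p : PolyW d p -> PolyW d.+1 p.
Proof.
elim: d p => [|d IH] p /=.
  by move=> H; exists 0, (fun _ => 0); split=> // t; rewrite H scaler0 addr0.
by move=> [c [q [Hq Hp]]]; exists c, q; split=> //; apply: IH.
Qed.

Lemma polyW_add d p q : PolyW d p -> PolyW d q -> PolyW d (fun t => p t + q t).
Proof.
elim: d p q => [|d IH] p q /=.
  by move=> Hp Hq t; rewrite Hp Hq addr0.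
move=> [c [r [Hr Hp]]] [c' [r' [Hr' Hq]]].
exists (c + c'), (fun t => r t + r' t); split; first exact: IH.
by move=> t; rewrite Hp Hq scalerDr; rewrite addrACA.
Qed.

Lemma polyW_scale d a p : PolyW d p -> PolyW d (fun t => a *: p t).
Proof.
elim: d p => [|d IH] p /=.
  by move=> Hp t; rewrite Hp scaler0.
move=> [c [r [Hr Hp]]]; exists (a *: c), (fun t => a *: r t); split; first exact: IH.
by move=> t; rewrite Hp scalerDr !scalerA mulrC.
Qed.

Lemma polyW_mulX d p : PolyW d p -> PolyW d.+1 (fun t => t *: p t).
Proof. by move=> H; exists 0, p; split=> // t; rewrite add0r. Qed.

Lemma polyW_const c : PolyW 1 (fun _ => c).
Proof. by exists c, (fun _ => 0); split=> // t; rewrite scaler0 addr0. Qed.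

Lemma polyW_factor d p a : PolyW d.+1 p ->
  exists r, PolyW d r /\ forall t, p t = p a + (t - a) *: r t.
Proof.
elim: d p => [|d IH] p /= [c [q [Hq Hp]]].
  exists (fun _ => 0); split=> [t //|t]. by rewrite !Hp !Hq !scaler0 !addr0.
have [s [Hs Eq]] := IH q Hq.
exists (fun t => q a + t *: s t); split; first by exists (q a), s.
move=> t; rewrite !Hp Eq !scalerDr !scalerA !scalerBl !addrA (mulrC t).
congr (_ + _); by rewrite addrAC addrK.
Qed.


Lemma polyW_roots d p (s : seq F) : uniq s -> size s = d -> PolyW d p ->
  (forall t, t \in s -> p t = 0) -> forall t, p t = 0.
Proof.
elim: d p s => [|d IH] p s Us Ss Hp Hz; first exact: Hp.
case: s Us Ss Hz => [|a s] //= /andP[aNs Us] [Ss] Hz.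
have [r [Hr Er]] := polyW_factor a Hp.
have pa : p a = 0 by apply: Hz; rewrite mem_head.
have r0 : forall t, r t = 0.
  apply: (IH r s) => // b bs.
  have := Hz b; rewrite in_cons bs orbT Er pa add0r => /(_ isT) /eqP.
  rewrite scaler_eq0 subr_eq0; case/orP => [/eqP E|/eqP //].
  by move: aNs; rewrite -E bs.
by move=> t; rewrite Er pa r0 scaler0 addr0.
Qed.

Lemma polyW_cover d p : PolyW d p -> (exists t, p t != 0) ->
  exists r : seq F, forall t, p t = 0 -> t \in r.
Proof.
move=> Hp [t0 Ht0].
have H : forall k, (exists s : seq F, [/\ uniq s, size s = k & forall t, t \in s -> p t = 0])
   \/ exists r : seq F, forall t, p t = 0 -> t \in r.
  elim=> [|k [ [s [Us Ss Hs]] |] ]; [by left; exists [::] | | by right].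
  case: (classic (exists t, p t = 0 /\ t \notin s)) => [[t [pt ts]]|N].
    left; exists (t :: s); split; [by rewrite /= ts | by rewrite /= Ss |].
    by move=> u; rewrite in_cons => /orP[/eqP->|]; [|apply: Hs].
  right; exists s => t pt; apply/negPn/negP => ts; apply: N; by exists t.
case: (H d) => [ [s [Us Ss Hs]] |//].
by move: Ht0; rewrite (polyW_roots Us Ss Hp Hs) eqxx.
Qed.
End P.

Lemma ml_poly (F : fieldType) (V W : lmodType F) (m : nat) (f : ('I_m -> V) -> W)
  (Hlin : multilinear f) (x y : 'I_m -> V) :
  PolyW m.+1 (fun t => f (fun k => x k + t *: y k)).
Proof.
have P : forall j, (j <= m)%N -> forall z,
  PolyW j.+1 (fun t => f (fun k => if (k < j)%N then x k + t *: y k else z k)).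
  elim=> [|j IH] jm z.
    by apply: polyW_ext (polyW_const (f z)) => t /=.
  have jm' : (j < m)%N by [].
  pose J := Ordinal jm'.
  have E : forall t v, (fun k : 'I_m => if (k < j)%N then x k + t *: y k else z k) =
      upd (fun k : 'I_m => if (k < j)%N then x k + t *: y k else z k) J v ->
      True by [].
  have E1 : forall t, (fun k : 'I_m => if (k < j.+1)%N then x k + t *: y k else z k) =
      upd (fun k : 'I_m => if (k < j)%N then x k + t *: y k else z k) J (t *: y J + x J).
    move=> t; apply: functional_extensionality => k; rewrite /upd.
    case: (eqVneq k J) => [->|kJ] /=; first by rewrite ltnSn addrC.
    have : val k != j by apply: contra kJ => /eqP kj; apply/eqP/val_inj.
    by rewrite ltnS leq_eqVlt => /negbTE ->.
  have E2 : forall t v, upd (fun k : 'I_m => if (k < j)%N then x k + t *: y k else z k) J v =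
      (fun k : 'I_m => if (k < j)%N then x k + t *: y k else upd z J v k).
    move=> t v; apply: functional_extensionality => k; rewrite /upd.
    by case: (eqVneq k J) => [->|kJ] /=; rewrite ?ltnn.
  apply: (polyW_ext (p := fun t => t *: f (fun k : 'I_m => if (k < j)%N then x k + t *: y k else upd z J (y J) k)
      + f (fun k : 'I_m => if (k < j)%N then x k + t *: y k else upd z J (x J) k))).
    by move=> t; rewrite E1 Hlin !E2.
  apply: polyW_add; first by apply: polyW_mulX; apply: IH; apply: ltnW.
  by apply: polyW_le; apply: IH; apply: ltnW.
apply: polyW_ext (P m (leqnn m) x) => t /=.
by congr f; apply: functional_extensionality => k; rewrite ltn_ord.
Qed.

Lemma collect (F : eqType) (I : eqType) (P : I -> F -> Prop) (s : seq I) :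
  (forall i, i \in s -> exists r : seq F, forall t, P i t -> t \in r) ->
  exists R : seq F, forall i, i \in s -> forall t, P i t -> t \in R.
Proof.
elim: s => [|i s IH] H; first by exists [::].
have [R HR] : exists R : seq F, forall i, i \in s -> forall t, P i t -> t \in R.
  by apply: IH => j js; apply: H; rewrite in_cons js orbT.
have [r Hr] := H i (mem_head _ _).
exists (r ++ R) => j; rewrite in_cons => /orP[/eqP->|js] t Pt; rewrite mem_cat.
  by rewrite Hr.
by rewrite (HR j js t Pt) orbT.
Qed.

Lemma common (F : fieldType) (V W : lmodType F) (HF : infinite_carrier F)
  (I : eqType) (g : I -> V -> W) (deg : I -> nat)
  (Hp : forall i x y, PolyW (deg i) (fun t => g i (x + t *: (y - x)))) (s : seq I) :
  (forall i, i \in s -> exists x, g i x != 0) ->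
  exists z, forall i, i \in s -> g i z != 0.
Proof.
elim: s => [|i s IH] H; first by exists 0.
have [x Hx] : exists x, forall j, j \in s -> g j x != 0.
  by apply: IH => j js; apply: H; rewrite in_cons js orbT.
have [y Hy] := H i (mem_head _ _).
have [|R HR] := @collect _ _ (fun j t => g j (x + t *: (y - x)) = 0) (i :: s).
  move=> j js; apply: polyW_cover (Hp j x y) _.
  move: js; rewrite in_cons => /orP[/eqP->|js].
    by exists 1; rewrite scale1r addrC subrK.
  by exists 0; rewrite scale0r addr0 Hx.
have [t Ht] := HF R.
exists (x + t *: (y - x)) => j js; apply/eqP => E.
by move: Ht; rewrite (HR j js t E).
Qed.

Theorem lemma3p10 (F : fieldType) (V W : lmodType F)
  (n : nat) (m : 'I_n -> nat) (f : forall i : 'I_n, ('I_(m i) -> V) -> W)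
  (HF : infinite_carrier F) (Hn : (0 < n)%N) (Hm : forall i, (0 < m i)%N)
  (Hlin : forall i, multilinear (f i))
  (Hzero : forall x : V, exists i : 'I_n, f i (diag (m i) x) = 0) :
  exists i : 'I_n, forall x : V, f i (diag (m i) x) = 0.
Proof.
apply: NNPP => N.
have H : forall i : 'I_n, exists x, f i (diag (m i) x) != 0.
  move=> i; apply: NNPP => Ni; apply: N; exists i => x; apply: NNPP => Nx.
  by apply: Ni; exists x; apply/eqP.
have [z Hz] : exists z, forall i, i \in enum 'I_n -> f i (diag (m i) z) != 0.
  apply: (@common F V W HF _ (fun i x => f i (diag (m i) x)) (fun i => (m i).+1)) => [i x y|i _].
    apply: polyW_ext (ml_poly (Hlin i) (diag _ x) (diag _ (y - x))) => t //.
  exact: H.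
have [i Hi] := Hzero z.
by move: (Hz i (mem_enum _ i)); rewrite Hi eqxx.
Qed.
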